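(* For all positive integers $m,n,w,d$ with $1\le w\le m-1$, $$A(m,n,w,d)\le A_{\mathrm S}\left(n(m-1),\,1-\frac{dm}{nw(m-w)}\right).$$
   Context: $J(m,w)$ denotes the set of binary vectors of length $m$ and Hamming weight $w$. Elements of $J(m,w)^n$ are identified with $m\times n$ binary matrices all of whose columns have weight $w$, with binary Hamming distance. $A(m,n,w,d)$ is the maximum cardinality of a nonempty subset of $J(m,w)^n$ with pairwise Hamming distances at least $2d$. For a positive integer $N$ and a real $s$, $A_{\mathrm S}(N,s)$ denotes the maximum cardinality of a spherical code of dimension $N$ and maximum cosine $s$, i.e. of a set of points on the unit sphere of $\mathbb{R}^N$ (Euclidean norm) such that the inner product of any two distinct points is at most $s$. *)

(* Defs.v *)
From HB Require Import structures.
From mathcomp Require Import all_boot all_order all_algebra.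
From mathcomp Require Import all_classical all_reals ereal.
Set Implicit Arguments. Unset Strict Implicit. Unset Printing Implicit Defensive.
Import Order.TTheory GRing.Theory Num.Theory.
Local Open Scope ring_scope.
Local Open Scope classical_set_scope.

(* Elements of J(m,w)^n : m x n binary matrices, every column of weight w. *)
Definition in_Jmwn (m n w : nat) (X : 'M[bool]_(m, n)) : bool :=
  [forall j : 'I_n, #|[set i : 'I_m | X i j]| == w].

Definition hamming (m n : nat) (X Y : 'M[bool]_(m, n)) : nat :=
  #|[set ij : 'I_m * 'I_n | X ij.1 ij.2 != Y ij.1 ij.2]|.

Definition const_weight_code (m n w d : nat) (C : {set 'M[bool]_(m, n)}) : bool :=
  [forall X in C, @in_Jmwn m n w X] &&
  [forall X in C, forall Y in C, (X != Y) ==> (2 * d <= @hamming m n X Y)%N].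

Definition A_cw (m n w d : nat) : nat :=
  \max_(C : {set 'M[bool]_(m, n)} | (C != finset.set0) && @const_weight_code m n w d C) #|C|.

Definition dotv (R : pzRingType) (N : nat) (u v : 'rV[R]_N) : R :=
  \sum_(i < N) u 0 i * v 0 i.

Definition spherical_code (R : realType) (N : nat) (s : R) (c : seq 'rV[R]_N) : Prop :=
  uniq c /\ (forall u, u \in c -> dotv u u = 1) /\
  (forall u v, u \in c -> v \in c -> u != v -> dotv u v <= s).

Definition A_S (R : realType) (N : nat) (s : R) : \bar R :=
  ereal_sup [set ((size c)%:R)%:E | c in [set c | @spherical_code R N s c]].

(* Main.v *)
Require Import Defs.
From HB Require Import structures.
From mathcomp Require Import all_boot all_order all_algebra.
From mathcomp Require Import all_classical all_reals ereal.
From mathcomp Require Import ring lra.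
Import Order.TTheory GRing.Theory Num.Theory.
Local Open Scope ring_scope.

Lemma dotv_mxvec (R : realType) p q (A B : 'M[R]_(p, q)) :
  dotv (mxvec A) (mxvec B) = \sum_i \sum_j A i j * B i j.
Proof.
rewrite /dotv (reindex (uncurry (@mxvec_index p q))) /=; last first.
  by case: (curry_mxvec_bij p q) => g h1 h2; exists g => x _; [apply h1|apply h2].
rewrite pair_bigA /=; apply: eq_big => // -[i j] _ /=.
by rewrite !mxvecE.
Qed.

Section CS.
Local Open Scope classical_set_scope.
Lemma in_mkset_bool (T : Type) (b : T -> bool) x : (x \in [set y | b y]) = b x.
Proof. by apply/idP/idP => [/set_mem|h] //; apply: mem_set. Qed.

Lemma card_mkset (T : finType) (b : T -> bool) :
  #|[set x | b x]| = (\sum_x (b x : nat))%N.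
Proof.
rewrite -sum1_card [LHS]big_mkcond /=; apply: eq_bigr => i _.
by rewrite in_mkset_bool; case: (b i).
Qed.
End CS.

Lemma sum_bool_nat (R : pzRingType) (T : finType) (b : T -> bool) :
  \sum_i ((b i)%:R : R) = (\sum_i (b i : nat))%:R.
Proof. by rewrite natr_sum. Qed.

Lemma hamming_sum m n (X Y : 'M[bool]_(m, n)) :
  hamming X Y = (\sum_i \sum_j ((X i j != Y i j) : nat))%N.
Proof. by rewrite /hamming card_mkset pair_bigA. Qed.

Lemma in_Jmwn_sum m n w (X : 'M[bool]_(m, n)) j :
  in_Jmwn w X -> (\sum_i (X i j : nat))%N = w.
Proof. by move=> /forallP /(_ j) /eqP; rewrite card_mkset. Qed.

Lemma hyper_iso (R : realType) k (p q : 'I_k.+1 -> R) :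
  \sum_i p i = 0 -> \sum_i q i = 0 ->
  let c := (1 + Num.sqrt (k.+1)%:R)^-1 in
  \sum_(l < k) (p (widen_ord (leqnSn k) l) + c * \sum_(l' < k) p (widen_ord (leqnSn k) l'))
             * (q (widen_ord (leqnSn k) l) + c * \sum_(l' < k) q (widen_ord (leqnSn k) l'))
  = \sum_i p i * q i.
Proof.
move=> hp hq c; rewrite big_ord_recr /=; rewrite big_ord_recr /= in hp; rewrite big_ord_recr /= in hq.
set S := \sum_(l < k) p _ in hp *; set T := \sum_(l < k) q _ in hq *.
have -> : p ord_max = - S by apply/eqP; rewrite -addr_eq0 addrC hp.
have -> : q ord_max = - T by apply/eqP; rewrite -addr_eq0 addrC hq.
have e : \sum_(l < k) (p (widen_ord (leqnSn k) l) + c * S) * (q (widen_ord (leqnSn k) l) + c * T)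
  = \sum_(l < k) p (widen_ord (leqnSn k) l) * q (widen_ord (leqnSn k) l)
    + c * S * T + c * T * S + k%:R * (c * S) * (c * T).
  rewrite (eq_bigr (fun l => p (widen_ord (leqnSn k) l) * q (widen_ord (leqnSn k) l)
     + (c * T) * p (widen_ord (leqnSn k) l) + (c * S) * q (widen_ord (leqnSn k) l)
     + (c * S) * (c * T))); last by move=> i _; ring.
  rewrite !big_split /= -!mulr_sumr sumr_const card_ord -/S -/T.
  rewrite mulr_natl; ring.
rewrite /S /T in e *; rewrite e.
rewrite /c; set r := (X in (1 + X)^-1).
have r0 : 0 <= r by apply: sqrtr_ge0.
have r2 : r ^+ 2 = k.+1%:R by rewrite /r sqr_sqrtr // ler0n.
have r1 : 1 + r != 0 by apply: lt0r_neq0; lra.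
have hk : k%:R = r ^+ 2 - 1 :> R by rewrite r2 -addn1 natrD addrK.
rewrite hk; field => //.
Qed.

Lemma col_dot (R : realType) m w (x x' : 'I_m -> bool) :
  (\sum_i (x i : nat))%N = w -> (\sum_i (x' i : nat))%N = w -> (0 < m)%N ->
  \sum_i ((x i)%:R - w%:R / m%:R) * ((x' i)%:R - w%:R / m%:R)
   = w%:R - w%:R ^+ 2 / m%:R - (\sum_i ((x i != x' i) : nat))%:R / 2 :> R.
Proof.
move=> hx hx' m0; set a := w%:R / m%:R.
have E : forall i, ((x i)%:R - a) * ((x' i)%:R - a) =
  ((x i)%:R + (x' i)%:R - (x i != x' i)%:R) / 2 - a * (x i)%:R - a * (x' i)%:R + a * a :> R.
  by move=> i; case: (x i); case: (x' i) => /=; field.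
rewrite (eq_bigr _ (fun i _ => E i)) !big_split /= !sumrN -!mulr_sumr -mulr_suml.
rewrite !big_split /= sumrN sumr_const card_ord !sum_bool_nat hx hx' -mulr_natl.
have m0' : m%:R != 0 :> R by rewrite pnatr_eq0 -lt0n.
rewrite /a; field => //.
Qed.

Lemma col_sum0 (R : realType) m w (x : 'I_m -> bool) :
  (\sum_i (x i : nat))%N = w -> (0 < m)%N ->
  \sum_i ((x i)%:R - w%:R / m%:R) = 0 :> R.
Proof.
move=> hx m0; rewrite big_split /= sumrN sumr_const card_ord sum_bool_nat hx.
have m0' : m%:R != 0 :> R by rewrite pnatr_eq0 -lt0n.
rewrite -mulr_natl; field => //.
Qed.

Lemma dotvZ (R : realType) N (a b : R) (u v : 'rV[R]_N) :
  dotv (a *: u) (b *: v) = a * b * dotv u v.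
Proof.
rewrite /dotv mulr_sumr; apply: eq_bigr => i _; rewrite !mxE; ring.
Qed.

Definition yv (R : realType) {k n : nat} (w : nat) (X : 'M[bool]_(k.+1, n)) (j : 'I_n) (i : 'I_k.+1) : R :=
  (X i j)%:R - w%:R / (k.+1)%:R.

Definition Zm (R : realType) {k n : nat} (w : nat) (X : 'M[bool]_(k.+1, n)) : 'M[R]_(n, k) :=
  \matrix_(j, l) (yv R w X j (widen_ord (leqnSn k) l)
     + (1 + Num.sqrt (k.+1)%:R)^-1 * \sum_(l' < k) yv R w X j (widen_ord (leqnSn k) l')).

Lemma dot_Z (R : realType) k n w (X Y : 'M[bool]_(k.+1, n)) :
  in_Jmwn w X -> in_Jmwn w Y ->
  dotv (mxvec (Zm R w X)) (mxvec (Zm R w Y)) =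
  n%:R * (w%:R - w%:R ^+ 2 / (k.+1)%:R) - (hamming X Y)%:R / 2.
Proof.
move=> hX hY; rewrite dotv_mxvec.
have -> : \sum_j \sum_l Zm R w X j l * Zm R w Y j l =
   \sum_(j < n) (w%:R - w%:R ^+ 2 / (k.+1)%:R - (\sum_i ((X i j != Y i j) : nat))%:R / 2).
  apply: eq_bigr => j _.
  rewrite -(@col_dot R k.+1 w (fun i => X i j) (fun i => Y i j)) //;
    try exact: in_Jmwn_sum.
  rewrite -(@hyper_iso R k (yv R w X j) (yv R w Y j)).
  - by apply: eq_bigr => l _; rewrite !mxE.
  - by rewrite /yv (@col_sum0 R k.+1 w (fun i => X i j)) // (@in_Jmwn_sum _ _ _ _ j hX).
  - by rewrite /yv (@col_sum0 R k.+1 w (fun i => Y i j)) // (@in_Jmwn_sum _ _ _ _ j hY).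
rewrite big_split /= sumrN sumr_const card_ord -mulr_suml mulr_natl.
by rewrite hamming_sum exchange_big natr_sum.
Qed.

Lemma hamming_xx m n (X : 'M[bool]_(m, n)) : hamming X X = 0%N.
Proof. by rewrite hamming_sum big1 // => i _; rewrite big1 // => j _; rewrite eqxx. Qed.

Theorem proposition12 (R : realType) (m n w d : nat) :
  (0 < m)%N -> (0 < n)%N -> (0 < d)%N -> (1 <= w)%N -> (w <= m - 1)%N ->
  (((A_cw m n w d)%:R : R)%:E <=
    A_S (n * (m - 1))
      (1 - (d * m)%:R / (n * w * (m - w))%:R : R))%E.
Proof.
move=> m0 n0 d0 w1 wm.
case: m m0 wm => // k _ wm.
rewrite subn1 /= in wm *.
set s := (1 - _ : R).
set N0 : R := n%:R * (w%:R - w%:R ^+ 2 / (k.+1)%:R).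
have wk : (w < k.+1)%N by [].
have eN0 : N0 = (n * w * (k.+1 - w))%:R / (k.+1)%:R.
  rewrite /N0 !natrM natrB ?(ltnW wk) //.
  have : (k.+1)%:R != 0 :> R by rewrite pnatr_eq0.
  move=> h; field => //.
have D0 : (0 < n * w * (k.+1 - w))%N by by rewrite !muln_gt0 n0 w1 subn_gt0 wk.
have hN0 : 0 < N0 by rewrite eN0 divr_gt0 // ltr0n.
pose f (X : 'M[bool]_(k.+1, n)) : 'rV[R]_(n * k) := (Num.sqrt N0)^-1 *: mxvec (Zm R w X).
have dotf : forall X Y, in_Jmwn w X -> in_Jmwn w Y ->
    dotv (f X) (f Y) = 1 - (hamming X Y)%:R / (2 * N0).
  move=> X Y hX hY; rewrite /f dotvZ dot_Z // -/N0 -invfM -expr2 sqr_sqrtr ?ltW //.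
  by field; rewrite lt0r_neq0.
have bound : forall X Y, in_Jmwn w X -> in_Jmwn w Y -> (2 * d <= hamming X Y)%N ->
    dotv (f X) (f Y) <= s.
  move=> X Y hX hY hd; rewrite dotf // /s lerD2l lerN2.
  have -> : (d * k.+1)%:R / (n * w * (k.+1 - w))%:R = d%:R / N0 :> R.
    rewrite eN0 natrM; field.
    by rewrite addrC natr1 !pnatr_eq0 -!lt0n subn_gt0 wk w1 n0.
  have h2 : d%:R * 2 <= (hamming X Y)%:R :> R by rewrite -natrM ler_nat mulnC.
  rewrite -subr_ge0.
  have -> : (hamming X Y)%:R / (2 * N0) - d%:R / N0 = ((hamming X Y)%:R - d%:R * 2) / (2 * N0).
    by field; rewrite lt0r_neq0.
  by rewrite divr_ge0 ?subr_ge0 // ltW // mulr_gt0.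
have hs1 : s < 1.
  by rewrite /s ltrBlDr ltrDl divr_gt0 // ltr0n // muln_gt0 d0.
have selfd : forall X, in_Jmwn w X -> dotv (f X) (f X) = 1.
  by move=> X hX; rewrite dotf // hamming_xx mul0r subr0.
rewrite /A_cw.
refine (big_ind (fun x : nat => ((x%:R : R)%:E <= A_S (n * k) s)%E) _ _ _).
- apply: ereal_sup_ubound; exists [::] => //.
- by move=> x y hx hy; case: (leqP x y).
move=> C /andP [_ /andP [/forall_inP hJ /forall_inP hD]].
have hD' : forall X Y, X \in C -> Y \in C -> X != Y -> (2 * d <= hamming X Y)%N.
  by move=> X Y hX hY ne; move: (hD X hX) => /forall_inP /(_ Y hY) /implyP; apply.
apply: ereal_sup_ubound; exists (map f (enum C)); last by rewrite size_map -cardE.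
split; [|split].
- rewrite map_inj_in_uniq ?enum_uniq // => X Y; rewrite !mem_enum => hX hY e.
  apply/eqP; apply: contraT => ne.
  have := bound X Y (hJ X hX) (hJ Y hY) (hD' X Y hX hY ne).
  by rewrite e selfd ?hJ // leNgt hs1.
- by move=> u /mapP [X hX ->]; rewrite mem_enum in hX; rewrite selfd ?hJ.
move=> u v /mapP [X hX ->] /mapP [Y hY ->] ne.
rewrite mem_enum in hX; rewrite mem_enum in hY.
apply: bound; rewrite ?hJ //; apply: hD' => //.
by apply: contraNneq ne => ->.
Qed.
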